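(* Let $\mathfrak E=(\mathfrak e_1,\dots,\mathfrak e_n)$ be an admissible sequence of virtual extended $\mathbb Z$-segments with $\mathrm{NV}(\mathfrak E)\ne0$. Then the set $[\mathfrak E]^{(P'')}$ consists of exactly one element.
   Context: A $\mathbb Z$-segment is $[A,B]=\{A,\dots,B\}$ ($A\ge B$ integers), length $b=A-B+1$. A virtual extended $\mathbb Z$-segment is $([A,B],l,\eta)$, $l\in\mathbb Z$, $l\le b/2$, $\eta\in\{\pm1\}$ with $\eta\sim-\eta$ iff $b=2l$; extended if $l\ge0$; $\mathrm{Supp}=[A,B]$. A sequence $(\mathfrak e_1,\dots,\mathfrak e_n)$ with supports $[A_i,B_i]$ is admissible if $A_i<A_j$ and $B_i<B_j$ imply $i<j$. Pairwise non-vanishing: for admissible $(\mathfrak e_1,\mathfrak e_2)$ with $\mathfrak e_i=([A_i,B_i],l_i,\eta_i)$, $b_i=A_i-B_i+1$, $\epsilon=(-1)^{A_1-B_1}\eta_1\eta_2$, write $\mathrm{NV}(\mathfrak e_1,\mathfrak e_2)\ne0$ iff both are extended and all applicable conditions hold: (a) if $A_1\le A_2$, $B_1\le B_2$: $\epsilon=1\Rightarrow B_1+l_1\le B_2+l_2,\ A_1-l_1\le A_2-l_2$; $\epsilon=-1\Rightarrow A_1-l_1<B_2+l_2$; (b) if $A_1\le A_2$, $B_1\ge B_2$: $\epsilon=1\Rightarrow0\le l_2-l_1\le b_2-b_1$; $\epsilon=-1\Rightarrow l_1+l_2\ge b_1$; (c) if $A_1\ge A_2$, $B_1\le B_2$: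 $\epsilon=1\Rightarrow0\le l_1-l_2\le b_1-b_2$; $\epsilon=-1\Rightarrow l_1+l_2\ge b_2$. Row exchange $R(\mathfrak e_1,\mathfrak e_2)=(\mathfrak e_2',\mathfrak e_1')$ for nested supports, $\mathfrak e_i'=([A_i,B_i],l_i',\eta_i')$: Case 1, $[A_1,B_1]\subseteq[A_2,B_2]$: $(l_1',\eta_1')=(l_1,(-1)^{A_2-B_2}\eta_1)$; if $\epsilon=1$ and $b_2-2l_2<2(b_1-2l_1)$, $(l_2',\eta_2')=(b_2-l_2-(b_1-2l_1),(-1)^{A_1-B_1}\eta_2)$; if $\epsilon=1$ and $b_2-2l_2\ge2(b_1-2l_1)$, $(l_2',\eta_2')=(l_2+b_1-2l_1,(-1)^{A_1-B_1+1}\eta_2)$; if $\epsilon=-1$, $(l_2',\eta_2')=(l_2-(b_1-2l_1),(-1)^{A_1-B_1+1}\eta_2)$. Case 2, $[A_1,B_1]\supsetneq[A_2,B_2]$: $(l_2',\eta_2')=(l_2,(-1)^{A_1-B_1}\eta_2)$; if $\epsilon=1$ and $b_1-2l_1<2(b_2-2l_2)$, $(l_1',\eta_1')=(b_1-l_1-(b_2-2l_2),(-1)^{A_2-B_2}\eta_1)$; if $\epsilon=1$ and $b_1-2l_1\ge2(b_2-2l_2)$, $(l_1',\eta_1')=(l_1+b_2-2l_2,(-1)^{A_2-B_2+1}\eta_1)$; if $\epsilon=-1$, $(l_1',\eta_1')=(l_1-(b_2-2l_2),(-1)^{A_2-B_2+1}\eta_1)$. For $\mathfrak E=(\mathfrak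 e_1,\dots,\mathfrak e_n)$ and $1\le k\le n-1$ with $\mathrm{Supp}(\mathfrak e_k),\mathrm{Supp}(\mathfrak e_{k+1})$ nested, $R_k(\mathfrak E)$ replaces $(\mathfrak e_k,\mathfrak e_{k+1})$ by $R(\mathfrak e_k,\mathfrak e_{k+1})$. $[\mathfrak E]$ is the set of sequences obtained from $\mathfrak E$ by finitely many such $R_k$. $\widetilde{\mathrm{NV}}(\mathfrak E)\ne0$ means $\mathrm{NV}(\mathfrak e_i,\mathfrak e_{i+1})\ne0$ for all $i$; $\mathrm{NV}(\mathfrak E)\ne0$ means $\widetilde{\mathrm{NV}}(\mathfrak E')\ne0$ for all $\mathfrak E'\in[\mathfrak E]$. A sequence satisfies $(P'')$ if $i<j$ implies $B_i\le B_j$, and $A_i\ge A_j$ when $B_i=B_j$. $[\mathfrak E]^{(P'')}$ is the set of members of $[\mathfrak E]$ satisfying $(P'')$. *)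

(* Defs.v *)
From Stdlib Require Import Bool ZArith List Relations.
Import ListNotations.
Open Scope Z_scope.

(* A virtual extended Z-segment ([A,B], l, eta); eta is +1 or -1 (as an integer). *)
Record seg := mkSeg { sA : Z; sB : Z; sl : Z; seta : Z }.

Definition blen (e : seg) : Z := sA e - sB e + 1.

Definition sgnpow (k : Z) : Z := if Z.even k then 1 else -1.

Definition valid_seg (e : seg) : Prop :=
  sB e <= sA e /\ 2 * sl e <= blen e /\ (seta e = 1 \/ seta e = -1).

Definition extended (e : seg) : Prop := 0 <= sl e.

(* The identification eta ~ -eta when b = 2l. *)
Definition seg_equiv (e f : seg) : Prop :=
  sA e = sA f /\ sB e = sB f /\ sl e = sl f /\
  (seta e = seta f \/ blen e = 2 * sl e).

Definition dflt : seg := mkSeg 0 0 0 1.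

Definition admissible (E : list seg) : Prop :=
  forall i j : nat, (i < length E)%nat -> (j < length E)%nat ->
    sA (nth i E dflt) < sA (nth j E dflt) ->
    sB (nth i E dflt) < sB (nth j E dflt) -> (i < j)%nat.

Definition eps (e1 e2 : seg) : Z := sgnpow (sA e1 - sB e1) * seta e1 * seta e2.

Definition NV_pair (e1 e2 : seg) : Prop :=
  let A1 := sA e1 in let B1 := sB e1 in let l1 := sl e1 in let b1 := blen e1 in
  let A2 := sA e2 in let B2 := sB e2 in let l2 := sl e2 in let b2 := blen e2 in
  let ep := eps e1 e2 in
  extended e1 /\ extended e2 /\
  (A1 <= A2 -> B1 <= B2 ->
     (ep = 1 -> B1 + l1 <= B2 + l2 /\ A1 - l1 <= A2 - l2) /\
     (ep = -1 -> A1 - l1 < B2 + l2)) /\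
  (A1 <= A2 -> B1 >= B2 ->
     (ep = 1 -> 0 <= l2 - l1 <= b2 - b1) /\
     (ep = -1 -> l1 + l2 >= b1)) /\
  (A1 >= A2 -> B1 <= B2 ->
     (ep = 1 -> 0 <= l1 - l2 <= b1 - b2) /\
     (ep = -1 -> l1 + l2 >= b2)).

Definition seg_sub (e1 e2 : seg) : Prop := sB e2 <= sB e1 /\ sA e1 <= sA e2.

Definition nested (e1 e2 : seg) : Prop := seg_sub e1 e2 \/ seg_sub e2 e1.

(* Row exchange R(e1,e2) = (e2', e1'); case 1 when Supp e1 ⊆ Supp e2,
   case 2 otherwise (used only when Supp e1 ⊋ Supp e2). *)
Definition row_exchange (e1 e2 : seg) : seg * seg :=
  let A1 := sA e1 in let B1 := sB e1 in let l1 := sl e1 in let b1 := blen e1 in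
  let A2 := sA e2 in let B2 := sB e2 in let l2 := sl e2 in let b2 := blen e2 in
  let h1 := seta e1 in let h2 := seta e2 in
  let ep := eps e1 e2 in
  if (B2 <=? B1) && (A1 <=? A2) then
    let e1' := mkSeg A1 B1 l1 (sgnpow (A2 - B2) * h1) in
    let e2' :=
      if ep =? 1 then
        if b2 - 2 * l2 <? 2 * (b1 - 2 * l1)
        then mkSeg A2 B2 (b2 - l2 - (b1 - 2 * l1)) (sgnpow (A1 - B1) * h2)
        else mkSeg A2 B2 (l2 + b1 - 2 * l1) (sgnpow (A1 - B1 + 1) * h2)
      else mkSeg A2 B2 (l2 - (b1 - 2 * l1)) (sgnpow (A1 - B1 + 1) * h2) in
    (e2', e1')
  else
    let e2' := mkSeg A2 B2 l2 (sgnpow (A1 - B1) * h2) in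
    let e1' :=
      if ep =? 1 then
        if b1 - 2 * l1 <? 2 * (b2 - 2 * l2)
        then mkSeg A1 B1 (b1 - l1 - (b2 - 2 * l2)) (sgnpow (A2 - B2) * h1)
        else mkSeg A1 B1 (l1 + b2 - 2 * l2) (sgnpow (A2 - B2 + 1) * h1)
      else mkSeg A1 B1 (l1 - (b2 - 2 * l2)) (sgnpow (A2 - B2 + 1) * h1) in
    (e2', e1').

Definition R_step (E E' : list seg) : Prop :=
  exists (pre post : list seg) (e1 e2 : seg),
    E = pre ++ e1 :: e2 :: post /\ nested e1 e2 /\
    E' = pre ++ (fst (row_exchange e1 e2)) :: (snd (row_exchange e1 e2)) :: post.

Definition in_class (E E' : list seg) : Prop := clos_refl_trans _ R_step E E'.

Definition NV_tilde (E : list seg) : Prop :=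
  forall i : nat, (S i < length E)%nat -> NV_pair (nth i E dflt) (nth (S i) E dflt).

Definition NV (E : list seg) : Prop := forall E', in_class E E' -> NV_tilde E'.

Definition P2 (E : list seg) : Prop :=
  forall i j : nat, (i < j)%nat -> (j < length E)%nat ->
    sB (nth i E dflt) <= sB (nth j E dflt) /\
    (sB (nth i E dflt) = sB (nth j E dflt) -> sA (nth i E dflt) >= sA (nth j E dflt)).

Definition seq_equiv (E F : list seg) : Prop := Forall2 seg_equiv E F.

(* Main.v *)
Require Import Defs.
From Stdlib Require Import Bool ZArith List Relations Lia Sorting.Sorted.
Import ListNotations.
Open Scope Z_scope.

Definition nrm (e : seg) : seg :=
  mkSeg (sA e) (sB e) (sl e) (if blen e =? 2 * sl e then 1 else seta e).
Definition Rn (e1 e2 : seg) : seg * seg :=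
  (nrm (fst (row_exchange e1 e2)), nrm (snd (row_exchange e1 e2))).

Lemma sgnpow_S k : sgnpow (k + 1) = - sgnpow k.
Proof. unfold sgnpow. rewrite Z.even_add. simpl. destruct (Z.even k); reflexivity. Qed.

Lemma sgnpow_cases k :
  (sgnpow k = 1 /\ exists q, k = 2 * q) \/ (sgnpow k = -1 /\ exists q, k = 2 * q + 1).
Proof.
  unfold sgnpow. destruct (Z.even k) eqn:H.
  - left. split; auto. apply Z.even_spec in H. destruct H as [q Hq]. exists q; lia.
  - right. split; auto. assert (Z.odd k = true) by (rewrite <- Z.negb_even, H; auto).
    apply Z.odd_spec in H0. destruct H0 as [q Hq]. exists q; lia.
Qed.

Lemma Rn1_spec A1 B1 l1 h1 A2 B2 l2 h2 :
  B2 <= B1 -> A1 <= A2 -> (h1 = 1 \/ h1 = -1) -> (h2 = 1 \/ h2 = -1) ->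
  2 * l1 <= A1 - B1 + 1 -> 2 * l2 <= A2 - B2 + 1 ->
  let s1 := sgnpow (A1 - B1) in let s2 := sgnpow (A2 - B2) in
  let b1 := A1 - B1 + 1 in let b2 := A2 - B2 + 1 in
  let d1 := b1 - 2 * l1 in let d2 := b2 - 2 * l2 in
  exists l2' h2' h1',
    Rn (mkSeg A1 B1 l1 h1) (mkSeg A2 B2 l2 h2) = (mkSeg A2 B2 l2' h2', mkSeg A1 B1 l1 h1') /\
    ((b1 = 2 * l1 /\ h1' = 1) \/ (2 * l1 < b1 /\ h1' = s2 * h1)) /\
    exists h, ((b2 = 2 * l2' /\ h2' = 1) \/ (2 * l2' < b2 /\ h2' = h)) /\
    ((s1 * h1 * h2 = 1 /\ d2 < 2 * d1 /\ l2' = b2 - l2 - d1 /\ h = s1 * h2) \/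
     (s1 * h1 * h2 = 1 /\ d2 >= 2 * d1 /\ l2' = l2 + d1 /\ h = - (s1 * h2)) \/
     (s1 * h1 * h2 = -1 /\ l2' = l2 - d1 /\ h = - (s1 * h2))).
Proof.
  intros HB HA Hh1 Hh2 Hw1 Hw2. cbv zeta.
  unfold Rn, row_exchange, nrm, eps, blen; cbn [sA sB sl seta fst snd].
  assert (Hc : andb (B2 <=? B1) (A1 <=? A2) = true) by (apply andb_true_intro; split; apply Z.leb_le; lia).
  rewrite Hc. rewrite !sgnpow_S.
  set (s1 := sgnpow (A1 - B1)). set (s2 := sgnpow (A2 - B2)).
  destruct (Z.eqb_spec (s1 * h1 * h2) 1) as [He|He].
  - destruct (Z.ltb_spec (A2 - B2 + 1 - 2 * l2) (2 * (A1 - B1 + 1 - 2 * l1))) as [Hl|Hl];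
    cbn [sA sB sl seta fst snd].
    + eexists _, _, _; split; [reflexivity|]. split.
      { destruct (Z.eqb_spec (A1 - B1 + 1) (2 * l1)); [left|right]; split; auto; lia. }
      exists (s1 * h2). split.
      { destruct (Z.eqb_spec (A2 - B2 + 1) (2 * (A2 - B2 + 1 - l2 - (A1 - B1 + 1 - 2 * l1)))); [left|right]; split; auto; lia. }
      left; repeat split; auto; try lia.
    + eexists _, _, _; split; [reflexivity|]. split.
      { destruct (Z.eqb_spec (A1 - B1 + 1) (2 * l1)); [left|right]; split; auto; lia. }
      exists (- s1 * h2). split.
      { match goal with |- context [if ?c then _ else _] => destruct c eqn:Hq end.
        - apply Z.eqb_eq in Hq. left; split; auto; try lia.
        - apply Z.eqb_neq in Hq. right; split; auto; try lia. }
      right; left; repeat split; auto; try lia.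
  - cbn [sA sB sl seta fst snd].
    eexists _, _, _; split; [reflexivity|]. split.
    { destruct (Z.eqb_spec (A1 - B1 + 1) (2 * l1)); [left|right]; split; auto; lia. }
    exists (- s1 * h2). split.
    { match goal with |- context [if ?c then _ else _] => destruct c eqn:Hq end.
      - apply Z.eqb_eq in Hq. left; split; auto; try lia.
      - apply Z.eqb_neq in Hq. right; split; auto; try lia. }
    right; right; repeat split; auto; try lia.
    destruct (sgnpow_cases (A1 - B1)) as [[Hs _]|[Hs _]]; fold s1 in Hs; rewrite Hs in *;
    destruct Hh1; destruct Hh2; subst; lia.
Qed.

Lemma Rn2_spec A1 B1 l1 h1 A2 B2 l2 h2 :
  ~ (B2 <= B1 /\ A1 <= A2) -> (h1 = 1 \/ h1 = -1) -> (h2 = 1 \/ h2 = -1) ->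
  2 * l1 <= A1 - B1 + 1 -> 2 * l2 <= A2 - B2 + 1 ->
  let s1 := sgnpow (A1 - B1) in let s2 := sgnpow (A2 - B2) in
  let b1 := A1 - B1 + 1 in let b2 := A2 - B2 + 1 in
  let d1 := b1 - 2 * l1 in let d2 := b2 - 2 * l2 in
  exists l1' h1' h2',
    Rn (mkSeg A1 B1 l1 h1) (mkSeg A2 B2 l2 h2) = (mkSeg A2 B2 l2 h2', mkSeg A1 B1 l1' h1') /\
    ((b2 = 2 * l2 /\ h2' = 1) \/ (2 * l2 < b2 /\ h2' = s1 * h2)) /\
    exists h, ((b1 = 2 * l1' /\ h1' = 1) \/ (2 * l1' < b1 /\ h1' = h)) /\
    ((s1 * h1 * h2 = 1 /\ d1 < 2 * d2 /\ l1' = b1 - l1 - d2 /\ h = s2 * h1) \/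
     (s1 * h1 * h2 = 1 /\ d1 >= 2 * d2 /\ l1' = l1 + d2 /\ h = - (s2 * h1)) \/
     (s1 * h1 * h2 = -1 /\ l1' = l1 - d2 /\ h = - (s2 * h1))).
Proof.
  intros HBA Hh1 Hh2 Hw1 Hw2. cbv zeta.
  unfold Rn, row_exchange, nrm, eps, blen; cbn [sA sB sl seta fst snd].
  assert (Hc : andb (B2 <=? B1) (A1 <=? A2) = false).
  { destruct (B2 <=? B1) eqn:E1; destruct (A1 <=? A2) eqn:E2; auto.
    apply Z.leb_le in E1; apply Z.leb_le in E2; tauto. }
  rewrite Hc. rewrite !sgnpow_S.
  set (s1 := sgnpow (A1 - B1)). set (s2 := sgnpow (A2 - B2)).
  destruct (Z.eqb_spec (s1 * h1 * h2) 1) as [He|He].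
  - destruct (Z.ltb_spec (A1 - B1 + 1 - 2 * l1) (2 * (A2 - B2 + 1 - 2 * l2))) as [Hl|Hl];
    cbn [sA sB sl seta fst snd].
    + eexists _, _, _; split; [reflexivity|]. split.
      { destruct (Z.eqb_spec (A2 - B2 + 1) (2 * l2)); [left|right]; split; auto; lia. }
      exists (s2 * h1). split.
      { match goal with |- context [if ?c then _ else _] => destruct c eqn:Hq end.
        - apply Z.eqb_eq in Hq. left; split; auto; try lia.
        - apply Z.eqb_neq in Hq. right; split; auto; try lia. }
      left; repeat split; auto; try lia.
    + eexists _, _, _; split; [reflexivity|]. split.
      { destruct (Z.eqb_spec (A2 - B2 + 1) (2 * l2)); [left|right]; split; auto; lia. }
      exists (- s2 * h1). split.
      { match goal with |- context [if ?c then _ else _] => destruct c eqn:Hq end.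
        - apply Z.eqb_eq in Hq. left; split; auto; try lia.
        - apply Z.eqb_neq in Hq. right; split; auto; try lia. }
      right; left; repeat split; auto; try lia.
  - cbn [sA sB sl seta fst snd].
    eexists _, _, _; split; [reflexivity|]. split.
    { destruct (Z.eqb_spec (A2 - B2 + 1) (2 * l2)); [left|right]; split; auto; lia. }
    exists (- s2 * h1). split.
    { match goal with |- context [if ?c then _ else _] => destruct c eqn:Hq end.
      - apply Z.eqb_eq in Hq. left; split; auto; try lia.
      - apply Z.eqb_neq in Hq. right; split; auto; try lia. }
    right; right; repeat split; auto; try lia.
    destruct (sgnpow_cases (A1 - B1)) as [[Hs _]|[Hs _]]; fold s1 in Hs; rewrite Hs in *;
    destruct Hh1; destruct Hh2; subst; lia.
Qed.

Definition vseg (e : seg) : Prop :=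
  sB e <= sA e /\ 2 * sl e <= blen e /\ (seta e = 1 \/ seta e = -1) /\
  (blen e = 2 * sl e -> seta e = 1).

Ltac sgnrw Hx Hy Hc :=
  repeat match goal with H : sgnpow _ = _ |- _ =>
    progress (rewrite ?H in Hx; rewrite ?H in Hy; rewrite ?H in Hc) end.

Ltac post Hx Hy Hc :=
  cbv beta iota zeta in Hx, Hy, Hc |- *; cbn [fst snd]; sgnrw Hx Hy Hc;
  destruct Hx as [[? ?]|[? ?]]; subst; try (exfalso; lia);
  destruct Hc as [(? & ? & ? & ?)|[(? & ? & ? & ?)|(? & ? & ?)]]; subst; try (exfalso; lia);
  destruct Hy as [[? ?]|[? ?]]; subst; try (exfalso; lia).

Ltac dstep :=
  match goal with
  | |- context [Rn (mkSeg ?A1 ?B1 ?l1 ?h1) (mkSeg ?A2 ?B2 ?l2 ?h2)] =>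
     let Heq := fresh "Heq" in let Hx := fresh "Hx" in let Hy := fresh "Hy" in
     let Hc := fresh "Hc" in
     first
     [ destruct (Rn1_spec A1 B1 l1 h1 A2 B2 l2 h2 ltac:(lia) ltac:(lia) ltac:(lia) ltac:(lia) ltac:(lia) ltac:(lia))
         as (?l' & ?h' & ?h1' & Heq & Hx & ?h & Hy & Hc);
       rewrite Heq; clear Heq; post Hx Hy Hc
     | destruct (Rn2_spec A1 B1 l1 h1 A2 B2 l2 h2 ltac:(lia) ltac:(lia) ltac:(lia) ltac:(lia) ltac:(lia))
         as (?l' & ?h' & ?h1' & Heq & Hx & ?h & Hy & Hc);
       rewrite Heq; clear Heq; post Hx Hy Hc ]
  end.

Ltac signs :=
  repeat match goal with
  | H : ?h = 1 \/ ?h = -1 |- _ => is_var h; destruct H; subst h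
  end.

Ltac pars :=
  repeat match goal with
  | |- context [sgnpow (?a - ?b)] =>
    let P := fresh "P" in let q := fresh "q" in let Q := fresh "Q" in
    destruct (sgnpow_cases (a - b)) as [[P [q Q]]|[P [q Q]]]; rewrite P
  end.

Ltac par a b :=
    let P := fresh "P" in let q := fresh "q" in let Q := fresh "Q" in
    destruct (sgnpow_cases (a - b)) as [[P [q Q]]|[P [q Q]]].

Lemma Rn_id A B l1 h1 l2 h2 :
  let x := mkSeg A B l1 h1 in let y := mkSeg A B l2 h2 in
  vseg x -> vseg y -> NV_pair x y -> Rn x y = (x, y).
Proof.
  cbv zeta. unfold vseg, NV_pair, extended, eps, blen; cbn [sA sB sl seta].
  intros (V1 & W1 & S1 & N1) (V2 & W2 & S2 & N2) Hnv.
  par A B; rewrite P in Hnv; signs; try (exfalso; lia);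
  dstep; f_equal; f_equal; lia.
Qed.

Lemma Rn_compat A1 B1 l1 h1 A2 B2 l2 h2 :
  let x := mkSeg A1 B1 l1 h1 in let y := mkSeg A2 B2 l2 h2 in
  valid_seg x -> valid_seg y -> Rn x y = Rn (nrm x) (nrm y).
Proof.
  cbv zeta. unfold valid_seg, nrm, blen; cbn [sA sB sl seta].
  intros (V1 & W1 & S1) (V2 & W2 & S2).
  destruct (Z.eqb_spec (A1 - B1 + 1) (2 * l1));
  destruct (Z.eqb_spec (A2 - B2 + 1) (2 * l2));
  destruct (Z_le_dec B2 B1); destruct (Z_le_dec A1 A2);
  par A1 B1; par A2 B2; signs; try (exfalso; lia);
  dstep; try dstep; try reflexivity; f_equal; f_equal; lia.
Qed.

Lemma NV_compat A1 B1 l1 h1 A2 B2 l2 h2 :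
  let x := mkSeg A1 B1 l1 h1 in let y := mkSeg A2 B2 l2 h2 in
  valid_seg x -> valid_seg y -> NV_pair x y -> NV_pair (nrm x) (nrm y).
Proof.
  cbv zeta. unfold valid_seg, NV_pair, extended, nrm, eps, blen; cbn [sA sB sl seta].
  intros (V1 & W1 & S1) (V2 & W2 & S2) Hnv.
  destruct (Z.eqb_spec (A1 - B1 + 1) (2 * l1));
  destruct (Z.eqb_spec (A2 - B2 + 1) (2 * l2));
  par A1 B1; rewrite P in *; signs; lia.
Qed.

Lemma valid_nrm e : valid_seg e -> vseg (nrm e).
Proof.
  destruct e as [A B l h]. unfold valid_seg, vseg, nrm, blen; cbn [sA sB sl seta].
  intros (V & W & S). destruct (Z.eqb_spec (A - B + 1) (2 * l)); lia.
Qed.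

Lemma sgnpow_pm k : sgnpow k = 1 \/ sgnpow k = -1.
Proof. unfold sgnpow; destruct (Z.even k); auto. Qed.

Lemma valid_rex x y : valid_seg x -> valid_seg y ->
  valid_seg (fst (row_exchange x y)) /\ valid_seg (snd (row_exchange x y)).
Proof.
  destruct x as [A1 B1 l1 h1], y as [A2 B2 l2 h2].
  unfold valid_seg, row_exchange, eps, blen; cbn [sA sB sl seta].
  intros (V1 & W1 & S1) (V2 & W2 & S2).
  destruct (sgnpow_pm (A1 - B1)) as [P1|P1]; destruct (sgnpow_pm (A2 - B2)) as [P2|P2];
  rewrite ?sgnpow_S; rewrite ?P1, ?P2; signs;
  repeat (match goal with
  | |- context [if ?c then _ else _] =>
      lazymatch c with context [if _ then _ else _] => fail | _ => idtac end;
      let E := fresh "E" in destruct c eqn:E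
  end); cbn [sA sB sl seta fst snd];
  repeat match goal with
  | H : (_ =? _) = true |- _ => apply Z.eqb_eq in H
  | H : (_ =? _) = false |- _ => apply Z.eqb_neq in H
  | H : (_ <? _) = true |- _ => apply Z.ltb_lt in H
  | H : (_ <? _) = false |- _ => apply Z.ltb_ge in H
  | H : (_ <=? _) = true |- _ => apply Z.leb_le in H
  | H : (_ <=? _) = false |- _ => apply Z.leb_gt in H
  | H : (_ && _)%bool = true |- _ => apply andb_prop in H; destruct H
  end; lia.
Qed.

Lemma Rn_inv A1 B1 l1 h1 A2 B2 l2 h2 :
  let x := mkSeg A1 B1 l1 h1 in let y := mkSeg A2 B2 l2 h2 in
  vseg x -> vseg y -> nested x y -> (A1 <> A2 \/ B1 <> B2) ->
  Rn (fst (Rn x y)) (snd (Rn x y)) = (x, y).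
Proof.
  cbv zeta. unfold vseg, nested, seg_sub, blen; cbn [sA sB sl seta].
  intros (V1 & W1 & S1 & N1) (V2 & W2 & S2 & N2) Hn Hd.
  destruct Hn as [Hn|Hn]; par A1 B1; par A2 B2; signs; try (exfalso; lia);
  dstep; cbn [fst snd]; dstep; f_equal; f_equal; lia.
Qed.

Lemma Rn_supp x y :
  sA (fst (Rn x y)) = sA y /\ sB (fst (Rn x y)) = sB y /\
  sA (snd (Rn x y)) = sA x /\ sB (snd (Rn x y)) = sB x.
Proof.
  unfold Rn, nrm, row_exchange; cbn [sA sB].
  destruct (andb _ _); [destruct (eps x y =? 1); [destruct (_ <? _)|]|
                        destruct (eps x y =? 1); [destruct (_ <? _)|]]; cbn; auto.
Qed.

Definition gtk (e f : seg) : Prop := sB f < sB e \/ (sB e = sB f /\ sA e < sA f).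
Definition lek (e f : seg) : Prop := sB e <= sB f /\ (sB e = sB f -> sA e >= sA f).
Definition gtkb (e f : seg) : bool := (sB f <? sB e) || ((sB e =? sB f) && (sA e <? sA f)).

Lemma gtkb_spec e f : gtkb e f = true <-> gtk e f.
Proof.
  unfold gtkb, gtk. rewrite orb_true_iff, andb_true_iff, Z.ltb_lt, Z.eqb_eq, Z.ltb_lt. tauto.
Qed.

Fixpoint swapk (k : nat) (G : list seg) : list seg :=
  match k, G with
  | O, e1 :: e2 :: r => fst (Rn e1 e2) :: snd (Rn e1 e2) :: r
  | S k', e :: r => e :: swapk k' r
  | _, _ => G
  end.

Fixpoint atk (P : seg -> seg -> Prop) (k : nat) (G : list seg) : Prop :=
  match k, G with
  | O, e1 :: e2 :: _ => P e1 e2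
  | S k', _ :: r => atk P k' r
  | _, _ => False
  end.

Lemma swapk_app pre a b r :
  swapk (length pre) (pre ++ a :: b :: r) = pre ++ fst (Rn a b) :: snd (Rn a b) :: r.
Proof. induction pre; simpl; auto. rewrite IHpre; auto. Qed.

Lemma atk_app (P : seg -> seg -> Prop) pre a b r :
  atk P (length pre) (pre ++ a :: b :: r) <-> P a b.
Proof. induction pre; simpl; tauto. Qed.

Lemma atk_split P k G : atk P k G ->
  exists pre a b r, G = pre ++ a :: b :: r /\ length pre = k /\ P a b.
Proof.
  revert G; induction k; intros G H.
  - destruct G as [|a [|b r]]; simpl in H; try contradiction.
    exists [], a, b, r; auto.
  - destruct G as [|e G]; simpl in H; try contradiction.
    destruct (IHk G H) as (pre & a & b & r & -> & <- & Hp).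
    exists (e :: pre), a, b, r; auto.
Qed.

Definition Ostep (G G' : list seg) : Prop := exists k, atk gtk k G /\ G' = swapk k G.
Definition Ostar := clos_refl_trans_1n _ Ostep.

Lemma Ostar_trans x y z : Ostar x y -> Ostar y z -> Ostar x z.
Proof.
  intros H1 H2. revert H2; induction H1 as [|a b c Hab Hbc IH]; intros; auto. apply Relation_Operators.rt1n_trans with b; auto. apply IH; auto.
Qed.

Lemma Ostep_cons e G G' : Ostep G G' -> Ostep (e :: G) (e :: G').
Proof. intros [k [H ->]]. exists (S k). simpl. auto. Qed.

Lemma Ostar_cons e G G' : Ostar G G' -> Ostar (e :: G) (e :: G').
Proof. intros H; induction H; [constructor|]. eapply Relation_Operators.rt1n_trans; [apply Ostep_cons; eauto|auto]. Qed.

Lemma Ostar_one G G' : Ostep G G' -> Ostar G G'.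
Proof. intros; eapply Relation_Operators.rt1n_trans; eauto; constructor. Qed.

Definition supp (e : seg) : Z * Z := (sA e, sB e).
Definition Radm (p q : Z * Z) : Prop := ~ (fst q < fst p /\ snd q < snd p).
Definition adm (G : list seg) : Prop := ForallOrdPairs Radm (map supp G).
Definition Pgood (G : list seg) : Prop := Forall vseg G /\ adm G.

Lemma FOP_swap (R : Z * Z -> Z * Z -> Prop) l1 a b l2 :
  ForallOrdPairs R (l1 ++ a :: b :: l2) -> R b a -> ForallOrdPairs R (l1 ++ b :: a :: l2).
Proof.
  induction l1; simpl; intros H Hba.
  - inversion H; subst. inversion H3; subst. inversion H2; subst.
    constructor; [constructor; auto|].
    constructor; auto.
  - inversion H; subst. constructor; auto.
    apply Forall_app in H2. destruct H2 as [H2a H2b]. apply Forall_app; split; auto.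
    inversion H2b; subst. inversion H4; subst. repeat constructor; auto.
Qed.

Lemma supp_swap_map (f : seg -> Z * Z) pre a b r a' b' :
  f a' = f b -> f b' = f a ->
  map f (pre ++ a' :: b' :: r) = map f pre ++ f b :: f a :: map f r.
Proof. intros. rewrite map_app; simpl. congruence. Qed.

Lemma adm_swap pre a b r a' b' :
  adm (pre ++ a :: b :: r) -> supp a' = supp b -> supp b' = supp a ->
  Radm (supp b) (supp a) ->
  adm (pre ++ a' :: b' :: r).
Proof.
  unfold adm. intros H Ha Hb Hr. rewrite (supp_swap_map supp pre a b r a' b' Ha Hb).
  rewrite map_app in H; simpl in H. apply FOP_swap; auto.
Qed.

Lemma supp_fst x y : supp (fst (Rn x y)) = supp y.
Proof. unfold supp. destruct (Rn_supp x y) as (H1 & H2 & _). congruence. Qed.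
Lemma supp_snd x y : supp (snd (Rn x y)) = supp x.
Proof. unfold supp. destruct (Rn_supp x y) as (_ & _ & H1 & H2). congruence. Qed.

Fixpoint cnt (e : seg) (r : list seg) : nat :=
  match r with [] => 0%nat | f :: r' => ((if gtkb e f then 1 else 0) + cnt e r')%nat end.
Fixpoint invc (G : list seg) : nat :=
  match G with [] => 0%nat | e :: r => (cnt e r + invc r)%nat end.

Lemma gtkb_supp e e' f f' : supp e = supp e' -> supp f = supp f' -> gtkb e f = gtkb e' f'.
Proof. unfold supp, gtkb. intros H1 H2. injection H1; injection H2; intros; congruence. Qed.

Lemma cnt_app e l1 l2 : cnt e (l1 ++ l2) = (cnt e l1 + cnt e l2)%nat.
Proof. induction l1; simpl; auto. rewrite IHl1. lia. Qed.

Lemma cnt_supp e e' r : supp e = supp e' -> cnt e r = cnt e' r.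
Proof. intros H; induction r; simpl; auto. rewrite IHr, (gtkb_supp e e' a a); auto. Qed.

Lemma invc_swap pre a b r a' b' :
  gtk a b -> supp a' = supp b -> supp b' = supp a ->
  (invc (pre ++ a' :: b' :: r) < invc (pre ++ a :: b :: r))%nat.
Proof.
  intros Hg Ha Hb. induction pre as [|e pre IH]; simpl.
  - rewrite (cnt_supp a' b r Ha), (cnt_supp b' a r Hb).
    rewrite (gtkb_supp a' b b' a Ha Hb).
    assert (gtkb a b = true) by (apply gtkb_spec; auto).
    assert (gtkb b a = false).
    { destruct (gtkb b a) eqn:E; auto. apply gtkb_spec in E. unfold gtk in *. lia. }
    rewrite H, H0. lia.
  - rewrite !cnt_app. simpl.
    rewrite (gtkb_supp e e a' b); auto. rewrite (gtkb_supp e e b' a); auto.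
    destruct (gtkb e a), (gtkb e b); lia.
Qed.

Lemma lek_trans : Relations_1.Transitive lek.
Proof. intros x y z. unfold lek. lia. Qed.

Lemma inv_or_sorted G : (exists k, atk gtk k G) \/ Sorted lek G.
Proof.
  induction G as [|e r IH].
  - right; constructor.
  - destruct IH as [[k Hk]|Hs].
    + left; exists (S k); simpl; auto.
    + destruct r as [|f r'].
      * right; repeat constructor.
      * destruct (gtkb e f) eqn:E.
        -- left; exists O; simpl. apply gtkb_spec; auto.
        -- right. constructor; auto. constructor.
           assert (~ gtk e f) by (intro H; apply gtkb_spec in H; congruence).
           unfold gtk, lek in *. lia.
Qed.

Lemma sorted_no_inv G k : StronglySorted lek G -> atk gtk k G -> False.
Proof.
  revert G; induction k; intros G Hs Ha.
  - destruct G as [|a [|b r]]; simpl in Ha; try contradiction.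
    inversion Hs; subst. inversion H2; subst. unfold lek, gtk in *. lia.
  - destruct G as [|e G]; simpl in Ha; try contradiction.
    inversion Hs; subst. eauto.
Qed.

Lemma braid x y z : vseg x -> vseg y -> vseg z -> seg_sub x y -> seg_sub y z ->
  let y1 := fst (Rn x y) in let x1 := snd (Rn x y) in
  let z2 := fst (Rn x1 z) in let x2 := snd (Rn x1 z) in
  let z3 := fst (Rn y1 z2) in let y3 := snd (Rn y1 z2) in
  let z4 := fst (Rn y z) in let y4 := snd (Rn y z) in
  let z5 := fst (Rn x z4) in let x5 := snd (Rn x z4) in
  let y6 := fst (Rn x5 y4) in let x6 := snd (Rn x5 y4) in
  z3 = z5 /\ y3 = y6 /\ x2 = x6.
Proof.
  destruct x as [a1 b1 l1 h1], y as [a2 b2 l2 h2], z as [a3 b3 l3 h3].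
  unfold vseg, seg_sub, blen; cbn [sA sB sl seta].
  intros (V1 & W1 & S1 & N1) (V2 & W2 & S2 & N2) (V3 & W3 & S3 & N3) [H1 H2] [H3 H4].
  cbv zeta.
  par a1 b1; par a2 b2; par a3 b3; signs; try (exfalso; lia);
  dstep; dstep; dstep; dstep; dstep; dstep;
  repeat split; f_equal; lia.
Qed.

Lemma vseg_valid e : vseg e -> valid_seg e.
Proof. unfold vseg, valid_seg. tauto. Qed.

Lemma vseg_Rn x y : vseg x -> vseg y -> vseg (fst (Rn x y)) /\ vseg (snd (Rn x y)).
Proof.
  intros Hx Hy. destruct (valid_rex x y (vseg_valid x Hx) (vseg_valid y Hy)).
  unfold Rn; cbn [fst snd]. split; apply valid_nrm; auto.
Qed.

Lemma FOP_app_r (R : Z * Z -> Z * Z -> Prop) l1 l2 : ForallOrdPairs R (l1 ++ l2) -> ForallOrdPairs R l2.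
Proof. induction l1; simpl; auto. intros H; inversion H; auto. Qed.

Lemma adm_pair pre a b r : adm (pre ++ a :: b :: r) -> Radm (supp a) (supp b).
Proof.
  unfold adm. rewrite map_app. intros H. apply FOP_app_r in H. simpl in H.
  inversion H; subst. inversion H2; auto.
Qed.

Lemma gtk_sub a b : gtk a b -> Radm (supp a) (supp b) -> seg_sub a b.
Proof. unfold gtk, Radm, supp, seg_sub; cbn [fst snd]. lia. Qed.

Lemma Pgood_swap_app pre a b r : Pgood (pre ++ a :: b :: r) -> nested a b ->
  Pgood (pre ++ fst (Rn a b) :: snd (Rn a b) :: r).
Proof.
  intros [Hv Ha] Hn. split.
  - apply Forall_app in Hv. destruct Hv as [Hv1 Hv2]. inversion Hv2; subst. inversion H2; subst.
    destruct (vseg_Rn a b H1 H3). apply Forall_app; split; auto.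
  - apply adm_swap with a b; auto using supp_fst, supp_snd.
    unfold nested, seg_sub, Radm, supp in *; cbn [fst snd]. lia.
Qed.

Lemma Pgood_Ostep G G' : Pgood G -> Ostep G G' -> Pgood G'.
Proof.
  intros Hg [k [Hk ->]]. destruct (atk_split _ _ _ Hk) as (pre & a & b & r & -> & <- & Hab).
  rewrite swapk_app. apply Pgood_swap_app; auto.
  left. apply gtk_sub; auto. apply (adm_pair pre a b r). apply Hg.
Qed.

Lemma Pgood_Ostar G G' : Pgood G -> Ostar G G' -> Pgood G'.
Proof. intros H1 H2. induction H2; eauto using Pgood_Ostep. Qed.

Lemma Ostep_invc G G' : Ostep G G' -> (invc G' < invc G)%nat.
Proof.
  intros [k [Hk ->]]. destruct (atk_split _ _ _ Hk) as (pre & a & b & r & -> & <- & Hab).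
  rewrite swapk_app. apply invc_swap; auto using supp_fst, supp_snd.
Qed.

Lemma Pgood_tail e G : Pgood (e :: G) -> Pgood G.
Proof.
  intros [Hv Ha]. split. inversion Hv; auto. unfold adm in *. simpl in Ha. inversion Ha; auto.
Qed.

Lemma gtk_supp e e' f f' : supp e = supp e' -> supp f = supp f' -> gtk e f -> gtk e' f'.
Proof. unfold supp, gtk. intros H1 H2. injection H1; injection H2; intros. lia. Qed.

Ltac ssp := match goal with
  | H : gtk ?u ?v |- gtk ?a ?b =>
    apply (gtk_supp u a v b);
    [ first [reflexivity | symmetry; apply supp_fst | symmetry; apply supp_snd]
    | first [reflexivity | symmetry; apply supp_fst | symmetry; apply supp_snd]
    | exact H ]
  end.

Lemma lc0 x y r j : Pgood (x :: y :: r) -> gtk x y -> atk gtk j (x :: y :: r) ->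
  exists G3, Ostar (swapk 0 (x :: y :: r)) G3 /\ Ostar (swapk j (x :: y :: r)) G3.
Proof.
  intros Hg Hxy Hj. destruct j as [|[|j]].
  - exists (swapk 0 (x :: y :: r)). split; constructor.
  - destruct r as [|z r]; cbn [atk] in Hj; try contradiction.
    destruct Hg as [Hv Ha].
    inversion Hv; subst. inversion H2; subst. inversion H4; subst.
    assert (Hxy' : Radm (supp x) (supp y)) by (apply (adm_pair [] x y (z :: r)); auto).
    assert (Hyz' : Radm (supp y) (supp z)) by (apply (adm_pair [x] y z r); auto).
    assert (Hxz : gtk x z) by (unfold gtk in *; lia).
    pose proof (braid x y z H1 H3 H5 (gtk_sub x y Hxy Hxy') (gtk_sub y z Hj Hyz')) as Hb.
    cbv zeta in Hb. destruct Hb as (E1 & E2 & E3).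
    exists (fst (Rn (fst (Rn x y)) (fst (Rn (snd (Rn x y)) z))) ::
            snd (Rn (fst (Rn x y)) (fst (Rn (snd (Rn x y)) z))) ::
            snd (Rn (snd (Rn x y)) z) :: r).
    split.
    + cbn [swapk atk]. eapply Relation_Operators.rt1n_trans.
      { exists 1%nat. split; [|reflexivity]. cbn [swapk atk].
        ssp. }
      eapply Relation_Operators.rt1n_trans.
      { exists 0%nat. split; [|reflexivity]. cbn [swapk atk].
        ssp. }
      cbn [swapk atk]. constructor.
    + cbn [swapk atk]. eapply Relation_Operators.rt1n_trans.
      { exists 0%nat. split; [|reflexivity]. cbn [swapk atk].
        ssp. }
      eapply Relation_Operators.rt1n_trans.
      { exists 1%nat. split; [|reflexivity]. cbn [swapk atk].
        ssp. }
      cbn [swapk atk]. rewrite E1, E2, E3. constructor.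
  - cbn [atk] in Hj.
    exists (fst (Rn x y) :: snd (Rn x y) :: swapk j r). split.
    + apply Ostar_one. exists (S (S j)). cbn [swapk atk]. auto.
    + apply Ostar_one. exists 0%nat. cbn [swapk atk]. auto.
Qed.

Lemma lc G k j : Pgood G -> atk gtk k G -> atk gtk j G ->
  exists G3, Ostar (swapk k G) G3 /\ Ostar (swapk j G) G3.
Proof.
  revert G j; induction k; intros G j Hg Hk Hj.
  - destruct G as [|x [|y r]]; simpl in Hk; try contradiction. apply lc0; auto.
  - destruct j.
    + destruct G as [|x [|y r]]; simpl in Hj; try contradiction.
      destruct (lc0 x y r (S k) Hg Hj Hk) as (G3 & H1 & H2). exists G3; auto.
    + destruct G as [|e G]; simpl in Hk; try contradiction. simpl in Hj.
      destruct (IHk G j (Pgood_tail e G Hg) Hk Hj) as (G3 & H1 & H2).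
      exists (e :: G3). simpl. split; apply Ostar_cons; auto.
Qed.

Lemma nf_exists n : forall G, (invc G < n)%nat -> Pgood G ->
  exists N, Ostar G N /\ StronglySorted lek N.
Proof.
  induction n; intros G Hn Hg; [lia|].
  destruct (inv_or_sorted G) as [[k Hk]|Hs].
  - assert (Hst : Ostep G (swapk k G)) by (exists k; auto).
    destruct (IHn (swapk k G)) as (N & H1 & H2).
    + pose proof (Ostep_invc _ _ Hst). lia.
    + eapply Pgood_Ostep; eauto.
    + exists N; split; auto. eapply Relation_Operators.rt1n_trans; eauto.
  - exists G. split; [constructor|]. apply Sorted_StronglySorted; auto. apply lek_trans.
Qed.

Lemma nf_unique n : forall G, (invc G < n)%nat -> Pgood G ->
  forall N1 N2, Ostar G N1 -> StronglySorted lek N1 -> Ostar G N2 -> StronglySorted lek N2 -> N1 = N2.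
Proof.
  induction n; intros G Hn Hg N1 N2 H1 S1 H2 S2; [lia|].
  destruct H1 as [|G1 N1x Hs1 Hr1].
  - destruct H2 as [|G2 N2x Hs2 Hr2]; auto.
    destruct Hs2 as [k [Hk _]]. exfalso; exact (sorted_no_inv _ k S1 Hk).
  - destruct H2 as [|G2 N2x Hs2 Hr2].
    + destruct Hs1 as [k [Hk _]]. exfalso; exact (sorted_no_inv _ k S2 Hk).
    + pose proof Hs1 as Hs1'. pose proof Hs2 as Hs2'.
      destruct Hs1 as [k [Hk E1]]. destruct Hs2 as [j [Hj E2]].
      destruct (lc G k j Hg Hk Hj) as (G3 & O1 & O2). rewrite <- E1 in O1. rewrite <- E2 in O2.
      assert (P1 : Pgood G1) by (apply (Pgood_Ostep G G1 Hg Hs1')).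
      assert (P2 : Pgood G2) by (apply (Pgood_Ostep G G2 Hg Hs2')).
      assert (P3 : Pgood G3) by (apply (Pgood_Ostar G1 G3 P1 O1)).
      pose proof (Ostep_invc _ _ Hs1'). pose proof (Ostep_invc _ _ Hs2').
      destruct (nf_exists (S (invc G3)) G3 ltac:(lia) P3) as (N3 & O3 & S3).
      transitivity N3.
      * apply (IHn G1 ltac:(lia) P1 N1x N3 Hr1 S1 (Ostar_trans _ _ _ O1 O3) S3).
      * symmetry. apply (IHn G2 ltac:(lia) P2 N2x N3 Hr2 S2 (Ostar_trans _ _ _ O2 O3) S3).
Qed.

Lemma rex_supp x y :
  supp (fst (row_exchange x y)) = supp y /\ supp (snd (row_exchange x y)) = supp x.
Proof.
  unfold supp, row_exchange.
  destruct (andb _ _); [destruct (eps x y =? 1); [destruct (_ <? _)|]|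
                        destruct (eps x y =? 1); [destruct (_ <? _)|]]; cbn; auto.
Qed.

Lemma supp_nrm e : supp (nrm e) = supp e.
Proof. reflexivity. Qed.

Lemma nth_app_mid {X} (pre : list X) a b r d :
  nth (length pre) (pre ++ a :: b :: r) d = a /\ nth (S (length pre)) (pre ++ a :: b :: r) d = b.
Proof. induction pre; simpl; auto. Qed.

Lemma FOP_of_nth {X} (R : X -> X -> Prop) (l : list X) d :
  (forall i j, (i < j)%nat -> (j < length l)%nat -> R (nth i l d) (nth j l d)) ->
  ForallOrdPairs R l.
Proof.
  induction l as [|a l IH]; intros H; constructor.
  - apply Forall_forall. intros x Hx. destruct (In_nth l x d Hx) as (j & Hj & <-).
    apply (H 0%nat (S j)); simpl; lia.
  - apply IH. intros i j Hij Hj. apply (H (S i) (S j)); simpl; lia.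
Qed.

Lemma SS_of_nth {X} (R : X -> X -> Prop) (l : list X) d :
  (forall i j, (i < j)%nat -> (j < length l)%nat -> R (nth i l d) (nth j l d)) ->
  StronglySorted R l.
Proof.
  induction l as [|a l IH]; intros H; constructor.
  - apply IH. intros i j Hij Hj. apply (H (S i) (S j)); simpl; lia.
  - apply Forall_forall. intros x Hx. destruct (In_nth l x d Hx) as (j & Hj & <-).
    apply (H 0%nat (S j)); simpl; lia.
Qed.

Lemma nth_of_SS {X} (R : X -> X -> Prop) (l : list X) d :
  StronglySorted R l ->
  forall i j, (i < j)%nat -> (j < length l)%nat -> R (nth i l d) (nth j l d).
Proof.
  induction 1 as [|a l Hs IH Hf]; intros i j Hij Hj; simpl in *; [lia|].
  destruct i, j; try lia.
  - rewrite Forall_forall in Hf. apply Hf. apply nth_In. lia.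
  - apply IH; lia.
Qed.

Lemma P2_SS E : P2 E -> StronglySorted lek E.
Proof.
  intros H. apply (SS_of_nth _ _ dflt). intros i j Hij Hj. destruct (H i j Hij Hj).
  unfold lek. split; auto.
Qed.

Lemma SS_P2 E : StronglySorted lek E -> P2 E.
Proof.
  intros H i j Hij Hj. pose proof (nth_of_SS _ _ dflt H i j Hij Hj). unfold lek in H0. lia.
Qed.

Lemma adm_of_admissible E : admissible E -> adm E.
Proof.
  intros H. unfold adm. apply (FOP_of_nth _ _ (supp dflt)). intros i j Hij Hj.
  rewrite length_map in Hj.
  rewrite !map_nth. unfold Radm, supp; cbn [fst snd]. intros [H1 H2].
  specialize (H j i Hj ltac:(lia) H1 H2). lia.
Qed.

Lemma SS_map_nrm l : StronglySorted lek l -> StronglySorted lek (map nrm l).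
Proof.
  induction 1; simpl; constructor; auto.
  apply Forall_map. eapply Forall_impl; [|eauto]. intros a0. unfold lek, nrm; cbn. auto.
Qed.

Lemma nrm_equiv e f : nrm e = nrm f -> seg_equiv e f.
Proof.
  destruct e as [A B l h], f as [A' B' l' h']. unfold nrm, seg_equiv, blen; cbn [sA sB sl seta].
  intros Heq. pose proof (f_equal sA Heq) as HA. pose proof (f_equal sB Heq) as HB.
  pose proof (f_equal sl Heq) as Hl. pose proof (f_equal seta Heq) as Hh.
  cbn [sA sB sl seta] in HA, HB, Hl, Hh. subst A' B' l'. clear Heq.
  repeat split; auto.
  destruct (Z.eqb_spec (A - B + 1) (2 * l)) as [E|E]; auto.
Qed.

Lemma nrm_equiv_list l1 l2 : map nrm l1 = map nrm l2 -> seq_equiv l1 l2.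
Proof.
  revert l2; induction l1 as [|a l1 IH]; intros [|b l2] H; simpl in H; try discriminate.
  - constructor.
  - pose proof (f_equal (@hd seg dflt) H) as H1. pose proof (f_equal (@tl seg) H) as H2.
    cbn [hd tl] in H1, H2.
    constructor; [apply nrm_equiv; exact H1 | apply IH; exact H2].
Qed.

Lemma valid_step F F' : Forall valid_seg F -> R_step F F' -> Forall valid_seg F'.
Proof.
  intros Hv (pre & post & e1 & e2 & -> & Hn & ->).
  apply Forall_app in Hv. destruct Hv as [H1 H2]. inversion H2; subst. inversion H4; subst.
  destruct (valid_rex e1 e2 H3 H5). apply Forall_app; split; auto.
Qed.

Lemma adm_step F F' : adm F -> R_step F F' -> adm F'.
Proof.
  intros Ha (pre & post & e1 & e2 & -> & Hn & ->).
  destruct (rex_supp e1 e2). apply adm_swap with e1 e2; auto.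
  unfold nested, seg_sub, Radm, supp in *; cbn [fst snd]. lia.
Qed.

Lemma class_inv E0 F : Forall valid_seg E0 -> adm E0 -> in_class E0 F ->
  Forall valid_seg F /\ adm F.
Proof.
  intros Hv Ha H. induction H; auto.
  - split; [eapply valid_step|eapply adm_step]; eauto; tauto.
  - tauto.
Qed.

Lemma Pgood_nrm F : Forall valid_seg F -> adm F -> Pgood (map nrm F).
Proof.
  intros Hv Ha. split.
  - apply Forall_map. eapply Forall_impl; [|eauto]. apply valid_nrm.
  - unfold adm in *. rewrite map_map. exact Ha.
Qed.

Lemma Rn_compat' x y : valid_seg x -> valid_seg y -> Rn x y = Rn (nrm x) (nrm y).
Proof. destruct x, y. apply Rn_compat. Qed.

Lemma step_nrm F F' pre e1 e2 post :
  Forall valid_seg F -> F = pre ++ e1 :: e2 :: post ->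
  F' = pre ++ fst (row_exchange e1 e2) :: snd (row_exchange e1 e2) :: post ->
  map nrm F' = swapk (length (map nrm pre)) (map nrm F).
Proof.
  intros Hv -> ->. rewrite !map_app. simpl. rewrite swapk_app.
  apply Forall_app in Hv. destruct Hv as [_ H2]. inversion H2; subst. inversion H3; subst.
  rewrite <- (Rn_compat' e1 e2); auto.
Qed.

Definition Sinv (N0 : list seg) (G : list seg) : Prop :=
  forall N, Ostar G N -> StronglySorted lek N -> N = N0.

Lemma propagate E0 N0 F F' : Forall valid_seg E0 -> adm E0 -> NV E0 ->
  in_class E0 F -> R_step F F' -> Sinv N0 (map nrm F) -> Sinv N0 (map nrm F').
Proof.
  intros Hv0 Ha0 Hnv HF Hst HS.
  assert (HF' : in_class E0 F') by (eapply rt_trans; [exact HF| apply rt_step; auto]).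
  destruct (class_inv E0 F Hv0 Ha0 HF) as [Hv Ha].
  destruct (class_inv E0 F' Hv0 Ha0 HF') as [Hv' Ha'].
  pose proof (Pgood_nrm F Hv Ha) as Pg. pose proof (Pgood_nrm F' Hv' Ha') as Pg'.
  pose proof Hst as (pre & post & e1 & e2 & EF & Hn & EF').
  pose proof (step_nrm F F' pre e1 e2 post Hv EF EF') as Hsw.
  assert (HG : map nrm F = map nrm pre ++ nrm e1 :: nrm e2 :: map nrm post)
    by (rewrite EF, map_app; reflexivity).
  rewrite HG, swapk_app in Hsw.
  assert (Hv12 : valid_seg e1 /\ valid_seg e2).
  { rewrite EF in Hv. apply Forall_app in Hv. destruct Hv as [_ H2].
    inversion H2; subst. inversion H3; subst. auto. }
  destruct Hv12 as [V1 V2].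
  assert (Hnv12 : NV_pair e1 e2).
  { assert (Hnt : NV_tilde F) by (apply Hnv; auto).
    destruct (nth_app_mid pre e1 e2 post dflt) as [N1 N2].
    specialize (Hnt (length pre)). rewrite EF in Hnt. rewrite N1, N2 in Hnt. apply Hnt.
    rewrite length_app; simpl; lia. }
  assert (Hnvn : NV_pair (nrm e1) (nrm e2)) by (destruct e1, e2; apply NV_compat; auto).
  pose proof (valid_nrm e1 V1) as W1. pose proof (valid_nrm e2 V2) as W2.
  set (x := nrm e1) in *. set (y := nrm e2) in *. set (P := map nrm pre) in *.
  set (Q := map nrm post) in *.
  assert (Hnxy : nested x y) by (unfold nested, seg_sub in *; subst x y; cbn; auto).
  destruct (gtkb x y) eqn:Eg.
  -
    apply gtkb_spec in Eg.
    intros N HN HsN. apply HS; auto. rewrite HG.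
    apply Relation_Operators.rt1n_trans with (map nrm F'); [|exact HN].
    rewrite Hsw. exists (length P). split; [apply atk_app; auto| rewrite swapk_app; reflexivity].
  - assert (Hng : ~ gtk x y) by (intro H; apply gtkb_spec in H; congruence).
    destruct (Z.eq_dec (sA x) (sA y)) as [EA|EA]; [destruct (Z.eq_dec (sB x) (sB y)) as [EB|EB]|].
    +
      assert (Hid : Rn x y = (x, y)).
      { destruct x as [A1 B1 l1 h1], y as [A2 B2 l2 h2]; cbn in EA, EB; subst A2 B2.
        apply Rn_id; auto. }
      rewrite Hid in Hsw; cbn [fst snd] in Hsw. rewrite Hsw, <- HG. exact HS.
    + (* different supports, reverse step *)
      assert (Hinv : Rn (fst (Rn x y)) (snd (Rn x y)) = (x, y)).
      { destruct x as [A1 B1 l1 h1], y as [A2 B2 l2 h2]. apply Rn_inv; auto. }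
      assert (Hgt : gtk (fst (Rn x y)) (snd (Rn x y))).
      { apply (gtk_supp y _ x _); [symmetry; apply supp_fst| symmetry; apply supp_snd|].
        unfold gtk in *. lia. }
      intros N HN HsN.
      destruct (nf_exists (S (invc (map nrm F))) (map nrm F) ltac:(lia) Pg) as (N1 & O1 & S1).
      assert (N1 = N0) by (apply HS; auto). subst N1.
      assert (O1' : Ostar (map nrm F') N0).
      { eapply Relation_Operators.rt1n_trans; [|exact O1].
        rewrite Hsw. exists (length P). split; [apply atk_app; auto|].
        rewrite swapk_app, Hinv, HG. reflexivity. }
      apply (nf_unique (S (invc (map nrm F'))) (map nrm F') ltac:(lia) Pg' N N0); auto.
    + assert (Hinv : Rn (fst (Rn x y)) (snd (Rn x y)) = (x, y)).
      { destruct x as [A1 B1 l1 h1], y as [A2 B2 l2 h2]. apply Rn_inv; auto. }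
      assert (Hgt : gtk (fst (Rn x y)) (snd (Rn x y))).
      { apply (gtk_supp y _ x _); [symmetry; apply supp_fst| symmetry; apply supp_snd|].
        unfold gtk in *. lia. }
      intros N HN HsN.
      destruct (nf_exists (S (invc (map nrm F))) (map nrm F) ltac:(lia) Pg) as (N1 & O1 & S1).
      assert (N1 = N0) by (apply HS; auto). subst N1.
      assert (O1' : Ostar (map nrm F') N0).
      { eapply Relation_Operators.rt1n_trans; [|exact O1].
        rewrite Hsw. exists (length P). split; [apply atk_app; auto|].
        rewrite swapk_app, Hinv, HG. reflexivity. }
      apply (nf_unique (S (invc (map nrm F'))) (map nrm F') ltac:(lia) Pg' N N0); auto.
Qed.

Lemma raw_sort E0 n : forall F, (invc F < n)%nat -> Forall valid_seg E0 -> adm E0 ->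
  in_class E0 F -> exists E', in_class E0 E' /\ StronglySorted lek E'.
Proof.
  induction n; intros F Hn Hv0 Ha0 HF; [lia|].
  destruct (class_inv E0 F Hv0 Ha0 HF) as [Hv Ha].
  destruct (inv_or_sorted F) as [[k Hk]|Hs].
  - destruct (atk_split _ _ _ Hk) as (pre & a & b & r & EF & _ & Hab).
    set (F' := pre ++ fst (row_exchange a b) :: snd (row_exchange a b) :: r).
    assert (Hst : R_step F F').
    { exists pre, r, a, b. split; auto. split; auto. left. apply gtk_sub; auto.
      apply (adm_pair pre a b r). rewrite <- EF; auto. }
    apply (IHn F'); auto.
    + unfold F'. destruct (rex_supp a b). rewrite EF in Hn. pose proof (invc_swap pre a b r _ _ Hab H H0). lia.
    + eapply rt_trans; [exact HF|apply rt_step; auto].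
  - exists F. split; auto. apply Sorted_StronglySorted; auto. apply lek_trans.
Qed.

Theorem lemma4p14 (E : list seg) :
  Forall valid_seg E -> admissible E -> NV E ->
  exists E', in_class E E' /\ P2 E' /\
    forall E'', in_class E E'' -> P2 E'' -> seq_equiv E'' E'.
Proof.
  intros Hv Had Hnv. pose proof (adm_of_admissible E Had) as Ha.
  pose proof (Pgood_nrm E Hv Ha) as Pg0.
  destruct (nf_exists (S (invc (map nrm E))) (map nrm E) ltac:(lia) Pg0) as (N0 & O0 & S0).
  assert (Hall : forall F, in_class E F -> Sinv N0 (map nrm F)).
  { intros F HF. apply clos_rt_rtn1 in HF. induction HF as [|F1 F2 Hs HF IH].
    - intros N HN HsN. apply (nf_unique (S (invc (map nrm E))) (map nrm E) ltac:(lia) Pg0); auto.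
    - apply (propagate E N0 F1 F2 Hv Ha Hnv); auto. apply clos_rtn1_rt; auto. }
  destruct (raw_sort E (S (invc E)) E ltac:(lia) Hv Ha (rt_refl _ _ _)) as (E' & HE' & SE').
  exists E'. split; auto. split; [apply SS_P2; auto|].
  intros E'' HE'' P2E''.
  apply nrm_equiv_list.
  rewrite (Hall E'' HE'' (map nrm E'') (rt1n_refl _ _ _) (SS_map_nrm _ (P2_SS _ P2E''))).
  rewrite (Hall E' HE' (map nrm E') (rt1n_refl _ _ _) (SS_map_nrm _ SE')). reflexivity.
Qed.
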